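(* Let $T$ be a directed tree with at least one edge whose underlying undirected graph is a path or a caterpillar. Then $T$ has span $1$.
   Context: A directed tree is a DAG (directed acyclic graph) whose underlying undirected graph is a tree. A caterpillar is a tree such that removing all its leaves yields a path (possibly empty or a single vertex). An upward-planar layered drawing of a DAG $G$ maps each vertex $v$ to a point in the plane whose y-coordinate $y(v)$ is an integer, and each edge $(u,v)$ (directed from tail $u$ to head $v$) to a strictly y-monotone curve going upward from $u$ to $v$ (so $y(u)<y(v)$), such that no two edges intersect except at common endpoints. The span of an edge $(u,v)$ in such a drawing $\Gamma$ is $y(v)-y(u)$; the span of $\Gamma$ is the maximum span of its edges; the span of an upward-planar DAG is the minimum span over all its upward-planar layered drawings. No embedding is prescribed. *)

(* Defs.v *)
From Stdlib Require Import Reals ZArith.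
From mathcomp Require Import all_boot.

Set Implicit Arguments.
Unset Strict Implicit.
Unset Printing Implicit Defensive.

Section Graphs.
Variables (V : finType) (E : rel V).

Definition uadj : rel V := fun u v => E u v || E v u.

Definition udeg (v : V) : nat := #|[set w | uadj v w]|.

Definition is_dag : Prop := forall u v, E u v -> ~~ connect E v u.

(* the underlying undirected (multi)graph is a tree:
   no antiparallel pair (which would be a double edge), connected,
   and number of edges = number of vertices - 1 *)
Definition underlying_tree : Prop :=
  (forall u v, E u v -> ~~ E v u) /\
  (forall u v, connect uadj u v) /\
  #|[set p : V * V | E p.1 p.2]| = #|V| - 1.

Definition directed_tree : Prop := is_dag /\ underlying_tree.

(* the subgraph of the underlying undirected graph induced by S is a path
   (possibly empty or a single vertex): connected, |edges| = |S| - 1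
   (so it is a tree), and maximum degree at most 2 *)
Definition induced_is_path (S : {set V}) : Prop :=
  (forall u v, u \in S -> v \in S ->
     connect (fun a b => [&& uadj a b, a \in S & b \in S]) u v) /\
  #|[set p : V * V | [&& E p.1 p.2, p.1 \in S & p.2 \in S]]| = #|S| - 1 /\
  (forall v, v \in S -> #|[set w in S | uadj v w]| <= 2).

Definition underlying_is_path : Prop := induced_is_path [set: V].

Definition leaves : {set V} := [set v | udeg v == 1].

Definition underlying_is_caterpillar : Prop := induced_is_path (~: leaves).

Record drawing := Drawing {
  xc : V -> R;
  yc : V -> Z;
  curve : V -> V -> R -> R * R
}.

Definition pt (D : drawing) (v : V) : R * R := (xc D v, IZR (yc D v)).

Definition in01 (t : R) : Prop := Rle 0 t /\ Rle t 1.

Definition upward_planar_layered (D : drawing) : Prop :=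
  (forall u v, pt D u = pt D v -> u = v) /\
  (forall u v, E u v ->
     (yc D u < yc D v)%Z /\
     curve D u v R0 = pt D u /\ curve D u v R1 = pt D v /\
     (forall t, continuity_pt (fun s => fst (curve D u v s)) t) /\
     (forall t, continuity_pt (fun s => snd (curve D u v s)) t) /\
     (forall s t, in01 s -> in01 t -> Rlt s t ->
        Rlt (snd (curve D u v s)) (snd (curve D u v t))) /\
     (forall w s, in01 s -> curve D u v s = pt D w -> w = u \/ w = v)) /\
  (forall u v u' v', E u v -> E u' v' -> (u, v) <> (u', v') ->
     forall s t, in01 s -> in01 t -> curve D u v s = curve D u' v' t ->
       exists w, (w = u \/ w = v) /\ (w = u' \/ w = v') /\
                 curve D u v s = pt D w).

(* span of a drawing: maximum edge span (edge spans are positive) *)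
Definition drawing_span (D : drawing) : nat :=
  \max_(p : V * V | E p.1 p.2) Z.to_nat (yc D p.2 - yc D p.1).

Definition has_span (k : nat) : Prop :=
  (exists D, upward_planar_layered D /\ drawing_span D = k) /\
  (forall D, upward_planar_layered D -> k <= drawing_span D).

End Graphs.

(* Main.v *)
Require Import Defs.
From Stdlib Require Import Reals ZArith Lra Lia.
From mathcomp Require Import all_boot.
From mathcomp Require Import zify.

Section Geom.
Local Open Scope R_scope.
Variables (V : finType) (E : rel V) (x : V -> R) (y : V -> Z).
Hypothesis xinj : injective x.
Hypothesis Ey : forall u v, E u v -> y v = (y u + 1)%Z.
Hypothesis sep : forall u v u' v', E u v -> E u' v' -> y u = y u' -> u <> u' -> v <> v' ->
  (Rlt (x u) (x u') /\ Rlt (x v) (x v')) \/ (Rlt (x u') (x u) /\ Rlt (x v') (x v)).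

Definition mkD := Drawing x y (fun u v t => (x u + t * (x v - x u), IZR (y u) + t)).

Lemma IZR_01 (z : Z) : (0 <= IZR z) -> (IZR z <= 1) -> z = 0%Z \/ z = 1%Z.
Proof. move=> h1 h2. apply le_IZR in h1. apply le_IZR in h2. lia. Qed.

Lemma IZR_m11 (z : Z) : (-1 <= IZR z) -> (IZR z <= 1) -> z = (-1)%Z \/ z = 0%Z \/ z = 1%Z.
Proof. move=> h1 h2. apply le_IZR in h1. apply le_IZR in h2. lia. Qed.

Lemma pt_inj u v : pt mkD u = pt mkD v -> u = v.
Proof. rewrite /pt /=. case=> h _. exact: xinj. Qed.

Lemma mkD_up : upward_planar_layered E mkD.
Proof.
split; first exact: pt_inj.
split.
- move=> u v Euv. have hy := Ey _ _ Euv.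
  split; first by rewrite /=; lia.
  split. rewrite /pt /=. f_equal; ring.
  split. rewrite /pt /= hy plus_IZR. f_equal; ring.
  split. move=> t /=. apply: continuity_pt_plus; first exact: continuity_pt_const.
    apply: continuity_pt_mult; [exact: (derivable_continuous_pt _ _ (derivable_pt_id _)) | exact: continuity_pt_const].
  split. move=> t /=. apply: continuity_pt_plus; first exact: continuity_pt_const.
    exact: (derivable_continuous_pt _ _ (derivable_pt_id _)).
  split. move=> s t _ _ /= h; lra.
  move=> w s [s0 s1] /=. rewrite /pt /=. case=> hx hyw.
  have: (IZR (y w - y u) = s) by rewrite minus_IZR; lra.
  move=> hs. have [h|h] := IZR_01 (y w - y u) ltac:(lra) ltac:(lra).
  + left. have s_0 : s = 0 by rewrite -hs h.
    apply: xinj. rewrite -hx s_0; ring.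
  + right. have s_1 : s = 1 by rewrite -hs h.
    apply: xinj. rewrite -hx s_1; ring.
- move=> u v u' v' Euv Euv' neq s t [s0 s1] [t0 t1] /=. case=> hx hyy.
  have hy := Ey _ _ Euv. have hy' := Ey _ _ Euv'.
  have hd : (IZR (y u - y u') = t - s) by rewrite minus_IZR; lra.
  have [h|[h|h]] := IZR_m11 (y u - y u') ltac:(lra) ltac:(lra).
  +
    have s1' : s = 1 by rewrite h in hd; lra.
    have t0' : t = 0 by rewrite h in hd; lra.
    have vu' : v = u'.
      apply: xinj. move: hx; rewrite s1' t0'. lra.
    exists v; split; [by right|split; [by left|]].
    rewrite /pt /= s1' hy plus_IZR; f_equal; ring.
  + have yeq : y u = y u' by lia.
    have st : s = t by rewrite h in hd; lra.
    subst t.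
    case: (Req_dec s 0) => [se|s0n]; first rewrite se in hx *.
      have uu' : u = u'. apply: xinj. move: hx. lra.
      exists u; split; [by left|split; [by left|]].
      rewrite /pt /=; f_equal; ring.
    case: (Req_dec s 1) => [se|s1n]; first rewrite se in hx *.
      have vv' : v = v'. apply: xinj. move: hx. lra.
      exists v; split; [by right|split; [by right|]].
      rewrite /pt /= hy plus_IZR; f_equal; ring.
    exfalso.
    have sp : (0 < s) by lra. have sq : (0 < 1 - s) by lra.
    case: (eqVneq u u') => [uu'|nu].
      subst u'. apply: neq. f_equal. apply: xinj.
      have : (s * (x v - x v') = 0) by lra.
      case/Rmult_integral => h0; lra.
    case: (eqVneq v v') => [vv'|nv].
      subst v'. apply: neq. f_equal. apply: xinj.
      have : ((1 - s) * (x u - x u') = 0) by lra.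
      case/Rmult_integral => h0; lra.
    have [[a b]|[a b]] := sep _ _ _ _ Euv Euv' yeq (elimN eqP nu) (elimN eqP nv).
    * have h1 : (0 < (1 - s) * (x u' - x u)) by apply: Rmult_lt_0_compat; lra.
      have h2 : (0 < s * (x v' - x v)) by apply: Rmult_lt_0_compat; lra.
      lra.
    * have h1 : (0 < (1 - s) * (x u - x u')) by apply: Rmult_lt_0_compat; lra.
      have h2 : (0 < s * (x v - x v')) by apply: Rmult_lt_0_compat; lra.
      lra.
  + have s0' : s = 0 by rewrite h in hd; lra.
    have t1' : t = 1 by rewrite h in hd; lra.
    have uv' : u = v'.
      apply: xinj. move: hx; rewrite s0' t1'. lra.
    exists u; split; [by left|split; [by right|]].
    rewrite /pt /= s0'; f_equal; ring.
Qed.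

End Geom.


Section Layout.
Variables (V : finType) (E : rel V) (x0 : V) (s : seq V) (nb : V -> V).
Hypothesis Exy : exists u v, E u v.
Hypothesis anti : forall u v, E u v -> ~~ E v u.
Hypothesis us : uniq s.
Hypothesis nbs : forall v, v \notin s -> nb v \in s.
Definition consec (a b : V) := [&& a \in s, b \in s & index b s == (index a s).+1].
Hypothesis Eform : forall a b, E a b ->
  [\/ consec a b, consec b a, (a \notin s) && (b == nb a) | (b \notin s) && (a == nb b)].

Fixpoint ys (i : nat) : Z := match i with 0 => 0%Z
  | j.+1 => (ys j + (if E (nth x0 s j) (nth x0 s j.+1) then 1 else -1))%Z end.
Definition yv v : Z := if v \in s then ys (index v s)
  else (ys (index (nb v) s) + (if E (nb v) v then 1 else -1))%Z.

Lemma Ey u v : E u v -> yv v = (yv u + 1)%Z.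
Proof.
move=> Euv. have Evu := anti _ _ Euv.
case: (Eform _ _ Euv).
- case/and3P=> ua va /eqP hi. rewrite /yv ua va hi /= -hi !nth_index // Euv. by [].
- case/and3P=> va ua /eqP hi. rewrite /yv ua va hi /= -hi !nth_index //.
  rewrite (negbTE Evu). lia.
- case/andP=> ua /eqP vb. have vs : v \in s by rewrite vb; exact: nbs.
  rewrite /yv (negbTE ua) vs -vb (negbTE Evu). lia.
- case/andP=> va /eqP ub. have us' : u \in s by rewrite ub; exact: nbs.
  rewrite /yv (negbTE va) us' -ub Euv. by [].
Qed.

Definition key v := if v \in s then (index v s).*2 else (index (nb v) s).*2.+1.

Lemma key_even v w : key v = key w -> ~~ odd (key v) -> v = w.
Proof.
rewrite /key. case: ifP => vs; case: ifP => ws h; rewrite /= ?odd_double //=.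
- have hi := congr1 half h; rewrite !doubleK in hi.
  by rewrite -(nth_index x0 vs) hi nth_index.
- have := congr1 odd h. by rewrite /= !odd_double.
Qed.

Lemma edge_lohi a b : E a b -> exists l h,
  ((l == a) && (h == b) || (l == b) && (h == a)) /\ ~~ odd (key l) /\ key l < key h <= (key l).+2.
Proof.
move=> Eab. case: (Eform _ _ Eab).
- case/and3P=> ua vb /eqP hi. exists a, b; split; first by rewrite !eqxx.
  rewrite /key ua vb hi odd_double. split => //. rewrite doubleS. lia.
- case/and3P=> ua vb /eqP hi. exists b, a; split; first by rewrite !eqxx orbT.
  rewrite /key ua vb hi odd_double. split => //. rewrite doubleS. lia.
- case/andP=> ua /eqP hb. have bs : b \in s by rewrite hb; exact: nbs.
  exists b, a; split; first by rewrite !eqxx orbT.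
  rewrite /key bs (negbTE ua) -hb odd_double. split => //. lia.
- case/andP=> ua /eqP hb. have bs : a \in s by rewrite hb; exact: nbs.
  exists a, b; split; first by rewrite !eqxx.
  rewrite /key bs (negbTE ua) -hb odd_double. split => //. lia.
Qed.

Lemma even_ex n : ~~ odd n -> exists i, n = 2 * i.
Proof. move=> h. exists n./2. rewrite -[n in LHS]odd_double_half (negbTE h) -muln2. lia. Qed.

Lemma sep_keys u v u' v' : E u v -> E u' v' ->
  u <> u' -> v <> v' -> u <> v' -> v <> u' ->
  (maxn (key u) (key v) < minn (key u') (key v')) \/ (maxn (key u') (key v') < minn (key u) (key v)).
Proof.
move=> E1 E2 n1 n2 n3 n4.
have [l1 [h1 [hlh1 [ev1 b1]]]] := edge_lohi _ _ E1.
have [l2 [h2 [hlh2 [ev2 b2]]]] := edge_lohi _ _ E2.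
have d1 : key l1 <> key l2.
  move=> h. have := key_even _ _ h ev1. move: hlh1 hlh2.
  case/orP=> /andP[/eqP e1 /eqP e2]; case/orP=> /andP[/eqP e3 /eqP e4] hh; subst; congruence.
have d2 : key h1 <> key l2.
  move=> h. have := key_even _ _ (esym h) ev2. move: hlh1 hlh2.
  case/orP=> /andP[/eqP e1 /eqP e2]; case/orP=> /andP[/eqP e3 /eqP e4] hh; subst; congruence.
have d3 : key h2 <> key l1.
  move=> h. have := key_even _ _ (esym h) ev1. move: hlh1 hlh2.
  case/orP=> /andP[/eqP e1 /eqP e2]; case/orP=> /andP[/eqP e3 /eqP e4] hh; subst; congruence.
have [i1 k1] := even_ex _ ev1. have [i2 k2] := even_ex _ ev2.
move: hlh1 hlh2 b1 b2 d1 d2 d3.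
case/orP=> /andP[/eqP e1 /eqP e2]; case/orP=> /andP[/eqP e3 /eqP e4]; subst; lia.
Qed.


Definition xv v : R := INR (key v * #|V| + enum_rank v).

Lemma xv_inj : injective xv.
Proof.
move=> a b /INR_eq h.
have := congr1 (modn^~ #|V|) h. rewrite !modnMDl !modn_small //.
by move/val_inj/enum_rank_inj.
Qed.

Lemma xv_lt a b : key a < key b -> Rlt (xv a) (xv b).
Proof.
move=> h. apply: lt_INR. apply/ltP.
have ha : enum_rank a < #|V| by [].
have : (key a).+1 * #|V| <= key b * #|V| by rewrite leq_mul2r h orbT.
rewrite mulSn. lia.
Qed.

Lemma sep_x u v u' v' : E u v -> E u' v' -> yv u = yv u' -> u <> u' -> v <> v' ->
  (Rlt (xv u) (xv u') /\ Rlt (xv v) (xv v')) \/ (Rlt (xv u') (xv u) /\ Rlt (xv v') (xv v)).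
Proof.
move=> E1 E2 hy n1 n2.
have y1 := Ey _ _ E1. have y2 := Ey _ _ E2.
have n3 : u <> v' by move=> e; subst; lia.
have n4 : v <> u' by move=> e; subst; lia.
case: (sep_keys _ _ _ _ E1 E2 n1 n2 n3 n4) => h.
- left; split; apply: xv_lt; lia.
- right; split; apply: xv_lt; lia.
Qed.

Lemma span_one : has_span E 1.
Proof.
have Ey' : forall u v, E u v -> yv v = (yv u + 1)%Z by move=> u v; exact: Ey.
have sep' := sep_x.
split.
- exists (@mkD V xv yv). split; first exact: (@mkD_up V E xv yv xv_inj Ey' sep').
  apply/eqP; rewrite eqn_leq; apply/andP; split.
  + apply/bigmax_leqP => p /= Ep. rewrite (Ey _ _ Ep).
    by have -> : (yv p.1 + 1 - yv p.1)%Z = 1%Z by lia.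
  + have [u [v Euv]] := Exy.
    apply: (leq_trans _ (leq_bigmax_cond (u, v) Euv)) => /=.
    rewrite (Ey _ _ Euv). by have -> : (yv u + 1 - yv u)%Z = 1%Z by lia.
- move=> D [_ [HE _]]. have [u [v Euv]] := Exy.
  apply: (leq_trans _ (leq_bigmax_cond (u, v) Euv)) => /=.
  have [h _] := HE u v Euv. lia.
Qed.

End Layout.


Section PathEnum.
Variables (V : finType) (E : rel V).
Hypothesis anti : forall {u v}, E u v -> ~~ E v u.

Definition nbS (S : {set V}) v := [set w in S | uadj E v w].
Definition edS (S : {set V}) := [set p : V * V | [&& E p.1 p.2, p.1 \in S & p.2 \in S]].

Lemma Eirr a : ~~ E a a.
Proof. by apply/negP => h; have := anti h; rewrite h. Qed.

Lemma uadj_irr a : ~~ uadj E a a.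
Proof. by rewrite /uadj orbb Eirr. Qed.

Lemma uadj_sym a b : uadj E a b = uadj E b a.
Proof. by rewrite /uadj orbC. Qed.

Lemma card_edS S : #|edS S| = \sum_(v in S) \sum_(w in S) (E v w : nat).
Proof.
rewrite -sum1_card big_mkcond /= [RHS]big_mkcond /=.
rewrite [RHS](eq_bigr (fun v => \sum_w ((v \in S) && (w \in S) && E v w : nat))); last first.
  move=> v _. case vS: (v \in S); last by rewrite big1.
  rewrite big_mkcond /=. apply: eq_bigr => w _.
  by case: (w \in S).
rewrite pair_big /=. apply: eq_bigr => [[a b]] _ /=.
rewrite inE /=. by case: (E a b); case: (a \in S); case: (b \in S).
Qed.

Lemma hand (S : {set V}) : \sum_(v in S) #|nbS S v| = (#|edS S|).*2.
Proof.
have h1 v : #|nbS S v| = \sum_(w in S) (E v w : nat) + \sum_(w in S) (E w v : nat).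
  rewrite -sum1_card (eq_bigl (fun w => (w \in S) && uadj E v w)); last by move=> w; rewrite inE.
  rewrite big_mkcondr /= -big_split /=. apply: eq_bigr => w _.
  rewrite /uadj. case Evw: (E v w); case Ewv: (E w v) => //.
  by have := anti Evw; rewrite Ewv.
rewrite (eq_bigr _ (fun v _ => h1 v)) big_split /= -addnn card_edS. congr (_ + _).
exact: exchange_big.
Qed.

Lemma low_deg (S : {set V}) : induced_is_path E S -> 0 < #|S| -> exists2 v, v \in S & #|nbS S v| <= 1.
Proof.
move=> [_ [hc _]] hS.
case: (boolP [exists v in S, #|nbS S v| <= 1]).
  by case/existsP=> v /andP[vS hv]; exists v.
rewrite negb_exists => /forallP hall.
have : \sum_(v in S) 2 <= \sum_(v in S) #|nbS S v|.
  apply: leq_sum => v vS. have := hall v. rewrite vS /=. lia.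
rewrite hand sum_nat_const. change (edS S) with [set p : V * V | [&& E p.1 p.2, p.1 \in S & p.2 \in S]].
rewrite hc. lia.
Qed.


Definition rS (S : {set V}) := fun a b => [&& uadj E a b, a \in S & b \in S].
Definition conn (S : {set V}) := forall a b, a \in S -> b \in S -> connect (rS S) a b.

Lemma two_nb (S : {set V}) v c d : c \in nbS S v -> d \in nbS S v -> c != d -> 2 <= #|nbS S v|.
Proof.
move=> hc hd cd. have <- : #|[set c; d]| = 2 by rewrite cards2 cd.
apply: subset_leq_card. apply/subsetP => x; rewrite in_set2 => /orP[]/eqP->; [exact: hc | exact: hd].
Qed.

Lemma conn_del (S : {set V}) v : conn S -> v \in S -> #|nbS S v| <= 1 -> conn (S :\ v).
Proof.
move=> hc vS hd a b aS bS.
move: (aS) (bS); rewrite !inE => /andP[av aS0] /andP[bv bS0].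
case/connectP: (hc a b aS0 bS0) => p pp eb.
move: eb; case/shortenP: pp => p' pp' up' _ eb.
have vnot : v \notin a :: p'.
  apply/negP => vin. rewrite inE in vin; case/orP: vin => [/eqP av'|vin].
    by subst; rewrite eqxx in av.
  move: pp' up' eb; case/splitPr: vin => p1 p2 pp' up' eb.
  case: p2 pp' up' eb => [|d p3] pp' up' eb.
    by move: bv; rewrite eb last_cat /= eqxx.
  rewrite cat_path /= in pp'. case/and3P: pp' => _ r1 /andP[r2 _].
  case/and3P: r1 => u1 c1 _. case/and3P: r2 => u2 _ d1.
  have hc' : last a p1 \in nbS S v by rewrite inE c1 uadj_sym u1.
  have hd' : d \in nbS S v by rewrite inE d1 u2.
  have cd : last a p1 != d.
    apply/eqP => e. move: up'. rewrite -cat_cons cat_uniq => /and3P[_ /hasPn hh _].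
    have := hh d. rewrite !inE eqxx orbT => /(_ isT). by rewrite -e -in_cons mem_last.
  have := two_nb _ _ _ _ hc' hd' cd. by rewrite leqNgt ltnS hd.
apply/connectP. exists p'; last by [].
have hall : all (predC (pred1 v)) (a :: p') by rewrite all_predC has_pred1.
apply: (sub_in_path _ hall pp').
move=> x y; rewrite !inE /= => hxv hyv /and3P[uxy xS yS].
by rewrite /rS uxy !inE hxv hyv xS yS.
Qed.

Lemma edS_del (S : {set V}) v w : v \in S -> nbS S v = [set w] -> #|edS S| = (#|edS (S :\ v)|).+1.
Proof.
move=> vS hw.
have wn : w \in nbS S v by rewrite hw set11.
move: (wn); rewrite inE => /andP[wS uw].
have wv : w != v by apply: contraTneq uw => ->; rewrite uadj_irr.
have nbw x : x \in S -> uadj E v x -> x = w.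
  move=> xS ux. have : x \in nbS S v by rewrite inE xS ux.
  by rewrite hw inE => /eqP.
pose p0 := if E v w then (v, w) else (w, v).
have p0E : E p0.1 p0.2.
  rewrite /p0; case: ifP => //= h. by move: uw; rewrite /uadj h.
have p0S : (p0.1 \in S) && (p0.2 \in S) by rewrite /p0; case: ifP => _ /=; rewrite vS wS.
have p0n : p0 \notin edS (S :\ v).
  by rewrite /p0 inE; case: ifP => _ /=; rewrite !inE eqxx /= ?andbF.
have -> : edS S = p0 |: edS (S :\ v).
  apply/setP => [[a b]]. rewrite in_setU1 !inE /=.
  apply/idP/idP.
  + case/and3P=> Eab aS bS. case: (eqVneq a v) => [av|av].
      subst a. have bw : b = w by apply: nbw; rewrite // /uadj Eab.
      subst b. by rewrite /p0 Eab eqxx.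
    case: (eqVneq b v) => [bv|bv].
      subst b. have aw : a = w by apply: nbw; rewrite // /uadj Eab orbT.
      subst a. by rewrite /p0 (negbTE (anti Eab)) eqxx.
    by rewrite Eab aS bS orbT.
  + case/orP => [/eqP e|].
      move: p0E p0S; rewrite -e /= => -> /andP[-> ->]. by [].
    by case/and3P => Eab /andP[_ aS] /andP[_ bS]; rewrite Eab aS bS.
by rewrite cardsU1 p0n.
Qed.

Notation cns := (consec V).
Definition Inv (S : {set V}) (s : seq V) := [/\ uniq s, s =i S,
  (forall a b, a \in S -> b \in S -> E a b -> cns s a b || cns s b a) &
  (forall a b, cns s a b -> uadj E a b)].

Lemma index_rev (s : seq V) x : uniq s -> x \in s -> index x (rev s) = size s - (index x s).+1.
Proof.
move=> us xs. have hi : index x s < size s by rewrite index_mem.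
have e : nth x s (index x s) = nth x (rev s) (size s - (index x s).+1).
  rewrite nth_rev; last by move: hi; set n := size s; lia.
  congr nth. move: hi; set n := size s; lia.
rewrite -{1}(nth_index x xs) e index_uniq ?rev_uniq ?size_rev //. all: move: hi; set n := size s; try lia.
Qed.

Lemma consec_rev (s : seq V) a b : uniq s -> cns (rev s) a b = cns s b a.
Proof.
move=> us. rewrite /consec !mem_rev.
case As: (a \in s); case Bs: (b \in s) => //=.
have ha : index a s < size s by rewrite index_mem.
have hb : index b s < size s by rewrite index_mem.
rewrite !index_rev //. apply/eqP/eqP; lia.
Qed.

Lemma Inv_rev S s : Inv S s -> Inv S (rev s).
Proof.
case=> us ms he ha. split.
- by rewrite rev_uniq.
- by move=> x; rewrite mem_rev ms.
- move=> a b aS bS Eab. rewrite !consec_rev // orbC. exact: he.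
- move=> a b. rewrite consec_rev // uadj_sym. exact: ha.
Qed.

Lemma Inv_small (S : {set V}) : #|S| <= 1 -> Inv S (enum S).
Proof.
move/card_le1_eqP => h. split.
- exact: enum_uniq.
- exact: mem_enum.
- move=> a b aS bS Eab. have e := h a b aS bS. subst. by rewrite (negbTE (Eirr _)) in Eab.
- move=> a b /and3P[aS bS /eqP hi]. rewrite !mem_enum in aS bS.
  have e := h a b aS bS. subst. lia.
Qed.

Lemma consec_cons (t : seq V) v a b : a != v -> b != v -> cns (v :: t) a b = cns t a b.
Proof.
move=> av bv. have va : (v == a) = false by rewrite eq_sym (negbTE av).
have vb : (v == b) = false by rewrite eq_sym (negbTE bv).
by rewrite /consec /= !inE va vb (negbTE av) (negbTE bv) /= eqSS.
Qed.

Lemma path_enum n : forall S : {set V}, #|S| = n -> induced_is_path E S -> exists s, Inv S s.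
Proof.
elim: n => [|n IH] S hS hP.
  by exists (enum S); apply: Inv_small; rewrite hS.
case: n IH hS => [|n] IH hS.
  by exists (enum S); apply: Inv_small; rewrite hS.
have [v vS hv] := low_deg _ hP (ltac:(rewrite hS; by [])).
have [hc [hcnt hdeg]] := hP.
have hc' : conn S := hc.
have : 0 < #|S :\ v| by move: hS; rewrite (cardsD1 v S) vS; lia.
case/card_gt0P => u uS'.
move: (uS'); rewrite !inE => /andP[uv uS].
case/connectP: (hc v u vS uS) => p pp eu.
case: p pp eu => [|c p] pp eu.
  by move: uv; rewrite eu /= eqxx.
move: pp => /= /andP[/and3P[uvc _ cS] _].
have cn : c \in nbS S v by rewrite inE cS uvc.
have h1 : #|nbS S v| == 1.
  rewrite eqn_leq hv /=. apply/card_gt0P; by exists c.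
case/cards1P: h1 => w hw.
have wn : w \in nbS S v by rewrite hw set11.
move: (wn); rewrite inE => /andP[wS uw].
have wv : w != v by apply: contraTneq uw => ->; rewrite uadj_irr.
have nbw x : x \in S -> uadj E v x -> x = w.
  move=> xS ux. have : x \in nbS S v by rewrite inE xS ux.
  by rewrite hw inE => /eqP.
set S' := S :\ v.
have hS' : #|S'| = n.+1 by move: hS; rewrite (cardsD1 v S) vS; rewrite /S'; lia.
have hP' : induced_is_path E S'.
  split; first exact: (conn_del _ _ hc' vS hv).
  split.
  - have e := edS_del _ _ _ vS hw. change (#|edS S'| = #|S'| - 1). change (#|edS S| = #|S| - 1) in hcnt. rewrite hS'; move: hcnt; rewrite hS e /S'. lia.
  - move=> x xS'. have xS : x \in S by move: xS'; rewrite !inE => /andP[].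
    apply: leq_trans (hdeg x xS). apply: subset_leq_card. apply/subsetP => y.
    by rewrite !inE => /andP[/andP[_ ->] ->].
have [s' [us' ms' he' ha']] := IH S' hS' hP'.
have wS' : w \in S' by rewrite !inE wv wS.
have dw : #|nbS S' w| <= 1.
  have : #|nbS S' w| < #|nbS S w|.
    apply: proper_card. apply/properP; split.
      apply/subsetP => y. by rewrite !inE => /andP[/andP[_ ->] ->].
    exists v; first by rewrite !inE vS uadj_sym uw.
    by rewrite !inE eqxx.
  have := hdeg w wS. change [set y in S | uadj E w y] with (nbS S w).
  move=> h2 h1; rewrite -ltnS; exact: leq_trans h1 h2.
have sz : size s' = n.+1.
  by rewrite -hS' -(card_uniqP us'); apply: eq_card.
have ws : w \in s' by rewrite ms'.
have endp : index w s' = 0 \/ index w s' = n.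
  have hi : index w s' < n.+1 by rewrite -sz index_mem.
  case: (ltnP 0 (index w s')) => h0; last by left; apply/eqP; rewrite -leqn0.
  case: (ltnP (index w s') n) => h2; last by right; apply/eqP; rewrite eqn_leq h2 -ltnS hi.
  exfalso.
  set i := index w s' in hi h0 h2.
  have ai : (i.-1 < size s') by rewrite sz; exact: leq_ltn_trans (leq_pred _) hi.
  have bi : (i.+1 < size s') by rewrite sz ltnS.
  set a := nth w s' i.-1. set b := nth w s' i.+1.
  have ain : a \in s' by apply: mem_nth.
  have bin : b \in s' by apply: mem_nth.
  have ia : index a s' = i.-1 by apply: index_uniq.
  have ib : index b s' = i.+1 by apply: index_uniq.
  have caw : cns s' a w by rewrite /consec ain ws ia prednK // /i eqxx.
  have cwb : cns s' w b by rewrite /consec bin ws ib /i eqxx.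
  have an : a \in nbS S' w by rewrite inE -ms' ain uadj_sym ha'.
  have bn : b \in nbS S' w by rewrite inE -ms' bin ha'.
  have ab : a != b by apply/eqP => e; move: ia; rewrite e ib; clear -h0; lia.
  have := two_nb _ _ _ _ an bn ab. by rewrite leqNgt ltnS dw.
have [t [[ut mt het hat] hw0]] : exists t, Inv S' t /\ index w t = 0.
  case: endp => h; first by exists s'.
  exists (rev s'). split; first exact: Inv_rev.
  rewrite index_rev // sz h. by rewrite subnn.
have wt : w \in t by rewrite mt.
have vt : v \notin t by rewrite mt !inE eqxx.
have cvw : cns (v :: t) v w.
  rewrite /consec /= !inE eqxx wt orbT /= (eq_sym v w) (negbTE wv) hw0. by [].
exists (v :: t). split.
- by rewrite cons_uniq vt ut.
- move=> x. rewrite inE mt !inE. by case: eqVneq => // ->; rewrite vS.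
- move=> a b aS bS Eab. case: (eqVneq a v) => [av|av].
    subst a. have bw : b = w by apply: nbw; rewrite // /uadj Eab.
    by rewrite bw cvw.
  case: (eqVneq b v) => [bv|bv].
    subst b. have aw : a = w by apply: nbw; rewrite // /uadj Eab orbT.
    by rewrite aw cvw orbT.
  rewrite !consec_cons //. apply: het => //; by rewrite !inE ?av ?bv ?aS ?bS.
- move=> a b. case: (eqVneq a v) => [av|av].
    subst a. case/and3P => _ bin /eqP hi.
    case: (eqVneq b v) => [bv|bv]; first by subst; move: hi => /=; rewrite eqxx.
    move: hi => /=. rewrite eqxx (eq_sym v b) (negbTE bv) => /eqP. rewrite eqSS => /eqP hb.
    have bin' : b \in t by move: bin; rewrite inE (negbTE bv).
    have -> : b = w by rewrite -(nth_index w bin') hb -hw0 nth_index.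
    by [].
  case: (eqVneq b v) => [bv|bv].
    subst b. case/and3P => _ _ /eqP. by rewrite /= eqxx (eq_sym v a) (negbTE av).
  rewrite consec_cons //. exact: hat.
Qed.

End PathEnum.


Section Main.
Variables (V : finType) (E : rel V).

Definition nbv v := odflt v [pick w | uadj E v w].

Lemma nb_eq v w z : udeg E v = 1 -> uadj E v w -> uadj E v z -> z = w.
Proof.
rewrite /udeg => /eqP /cards1P [x hx] hw hz.
have : w \in [set w | uadj E v w] by rewrite inE.
have : z \in [set w | uadj E v w] by rewrite inE.
by rewrite hx !inE => /eqP -> /eqP ->.
Qed.

Lemma nbv_adj v : udeg E v = 1 -> uadj E v (nbv v).
Proof.
move=> h. rewrite /nbv. case: pickP => [z hz //|none].
move: h; rewrite /udeg => /eqP /cards1P [x hx].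
have : x \in [set w | uadj E v w] by rewrite hx set11.
by rewrite inE none.
Qed.

Lemma pair_closed a b : (forall u v, connect (uadj E) u v) ->
  udeg E a = 1 -> udeg E b = 1 -> uadj E a b -> forall c, (c == a) || (c == b).
Proof.
move=> hc ha hb hab c.
have hba : uadj E b a by rewrite /uadj orbC.
have cl : closed (uadj E) (mem [set a; b]).
  have fw x y : uadj E x y -> x \in [set a; b] -> y \in [set a; b].
    move=> hxy. rewrite !inE => /orP[] /eqP ex; subst x.
    - by rewrite (nb_eq _ _ _ ha hab hxy) eqxx orbT.
    - by rewrite (nb_eq _ _ _ hb hba hxy) eqxx.
  move=> x y hxy /=. apply/idP/idP; first exact: fw.
  apply: fw. by rewrite /uadj orbC.
have := closed_connect cl (hc a c). rewrite !inE eqxx /=.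
by move=> <-.
Qed.

End Main.

Theorem mainTheorem7 (V : finType) (E : rel V) :
  directed_tree E ->
  (exists u v, E u v) ->
  (underlying_is_path E \/ underlying_is_caterpillar E) ->
  has_span E 1.
Proof.
move=> [_ [anti [hc _]]] Exy hpc.
have [u0 [v0 E0]] := Exy.
suff [s [nb [us [nbs Ef]]]] : exists s nb, uniq s /\ (forall v, v \notin s -> nb v \in s) /\
  (forall a b, E a b -> [\/ consec V s a b, consec V s b a, (a \notin s) && (b == nb a)
      | (b \notin s) && (a == nb b)]).
  exact: (@span_one V E u0 s nb Exy anti us nbs Ef).
case: hpc => [hp|hp].
- have [s [us ms he _]] := path_enum _ _ anti _ _ (erefl #|[set: V]|) hp.
  exists s, id; split => //; split.
    by move=> v; rewrite ms inE.
  move=> a b Eab. case/orP: (he a b (in_setT a) (in_setT b) Eab) => h.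
  + exact: Or41. + exact: Or42.
- case: (eqVneq (~: leaves E) set0) => [S0|Sn].
  + have lv v : udeg E v = 1.
      have : v \notin ~: leaves E by rewrite S0 inE.
      by rewrite !inE negbK => /eqP.
    have u0v0 : u0 != v0 by apply: contraTneq E0 => ->; apply/negP => h; have := anti _ _ h; rewrite h.
    have hab := pair_closed _ _ _ _ hc (lv u0) (lv v0) (ltac:(by rewrite /uadj E0)).
    exists [:: u0], (fun _ => u0). split => //. split.
      by move=> v _; rewrite inE.
    move=> a b Eab.
    have ab : a != b by apply: contraTneq Eab => ->; apply/negP => h; have := anti _ _ h; rewrite h.
    have v0n : v0 \notin [:: u0] by rewrite inE eq_sym.
    case/orP: (hab a) => /eqP ea; case/orP: (hab b) => /eqP eb; subst a b.
    * by rewrite eqxx in ab.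
    * apply: Or44. by rewrite v0n eqxx.
    * apply: Or43. by rewrite v0n eqxx.
    * by rewrite eqxx in ab.
  + have [s [us ms he _]] := path_enum _ _ anti _ _ (erefl #|~: leaves E|) hp.
    have leafP v : v \notin s -> udeg E v = 1.
      by rewrite ms !inE negbK => /eqP.
    exists s, (nbv V E). split => //. split.
      move=> v vs. have lv := leafP v vs.
      have adj := nbv_adj _ _ _ lv.
      rewrite ms. apply/negPn/negP => hn.
      have lw : udeg E (nbv V E v) = 1 by move: hn; rewrite !inE negbK => /eqP.
      have hab := pair_closed _ _ _ _ hc lv lw adj.
      case/set0Pn: Sn => x. rewrite !inE.
      by case/orP: (hab x) => /eqP ->; rewrite ?lv ?lw.
    move=> a b Eab.
    case as_: (a \in s); last first.
      apply: Or43. rewrite /=. apply/eqP; apply: (nb_eq _ _ _ _ _ (leafP a (negbT as_))).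
        exact: nbv_adj _ _ _ (leafP a (negbT as_)).
      by rewrite /uadj Eab.
    case bs: (b \in s); last first.
      apply: Or44. rewrite /=. apply/eqP; apply: (nb_eq _ _ _ _ _ (leafP b (negbT bs))).
        exact: nbv_adj _ _ _ (leafP b (negbT bs)).
      by rewrite /uadj Eab orbT.
    rewrite !ms in as_ bs.
    case/orP: (he a b as_ bs Eab) => h.
    * exact: Or41. * exact: Or42.
Qed.
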